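(* Let $\mathbb{F}\subset\mathbb{C}$ be a field, let $n\in\mathbb{N}$, let $\alpha_1,\ldots,\alpha_n$ be non-negative integers, and let $F\colon\mathbb{F}^n\to\mathbb{C}$ be a symmetric $n$-additive function. Then the function $g\colon\mathbb{F}\to\mathbb{C}$ defined by \[ g(x)=F(x^{\alpha_1},\ldots,x^{\alpha_n})\qquad(x\in\mathbb{F}) \] (with the convention $x^0=1$) is a generalized monomial of degree $\alpha_1+\cdots+\alpha_n$.
   Context: A function $A\colon\mathbb{F}^k\to\mathbb{C}$ is $k$-additive if it is additive (with respect to the additive group of $\mathbb{F}$) in each variable; a $0$-additive function is a constant. A function $f\colon\mathbb{F}\to\mathbb{C}$ is a generalized monomial of degree $k$ if there is a symmetric $k$-additive $A\colon\mathbb{F}^k\to\mathbb{C}$ with $f(x)=A(x,\ldots,x)$ for all $x\in\mathbb{F}$. *)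

(* Defs.v *)
From HB Require Import structures.
From mathcomp Require Import all_boot all_order all_algebra all_fingroup.
From mathcomp Require Import reals.
From mathcomp Require Import complex.
Set Implicit Arguments. Unset Strict Implicit. Unset Printing Implicit Defensive.
Import Order.TTheory GRing.Theory Num.Theory.
Local Open Scope ring_scope.

Definition upd (T : Type) (k : nat) (v : 'I_k -> T) (i : 'I_k) (a : T) : 'I_k -> T :=
  fun j => if j == i then a else v j.

Definition k_additive (F : fieldType) (V : zmodType) (k : nat)
    (A : ('I_k -> F) -> V) : Prop :=
  forall (i : 'I_k) (v : 'I_k -> F) (a b : F),
    A (upd v i (a + b)) = A (upd v i a) + A (upd v i b).

Definition symmetric_fun (F : Type) (V : Type) (k : nat)
    (A : ('I_k -> F) -> V) : Prop :=
  forall (s : {perm 'I_k}) (v : 'I_k -> F), A (fun j => v (s j)) = A v.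

Definition generalized_monomial (F : fieldType) (V : zmodType) (k : nat)
    (f : F -> V) : Prop :=
  exists A : ('I_k -> F) -> V,
    [/\ k_additive A, symmetric_fun A & forall x : F, f x = A (fun _ => x)].

(* Main.v *)
Require Import Defs.
From Stdlib Require FunctionalExtensionality.
From HB Require Import structures.
From mathcomp Require Import all_boot all_order all_algebra all_fingroup.
From mathcomp Require Import reals complex.
Import Order.TTheory GRing.Theory Num.Theory.
Local Open Scope ring_scope.
Section S.
Variables (n : nat) (alpha : 'I_n -> nat).
Definition TT := {i : 'I_n & 'I_(alpha i)}.
Lemma cardTT : #|{: TT}| = (\sum_(i < n) alpha i)%N.
Proof.
rewrite card_tagged -big_enum /=.
elim: (enum _) => [|a s IH]; first by rewrite big_nil.
by rewrite big_cons /= IH card_ord.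
Qed.
Definition hh (j : 'I_(\sum_(i < n) alpha i)) : TT := enum_val (cast_ord (esym cardTT) j).
Lemma hh_bij : bijective hh.
Proof.
apply: (bij_comp (enum_val_bij TT)).
exists (cast_ord cardTT) => x; apply: val_inj => //.
Qed.
Lemma card_tag i : #|[pred t : TT | tag t == i]| = alpha i.
Proof.
rewrite -[RHS]card_ord -(card_image (f := fun k : 'I_(alpha i) => Tagged (fun i => 'I_(alpha i)) k)).
  apply: eq_card => t; rewrite inE; apply/idP/idP.
    case: t => j k /= /eqP Eji; subst j; exact: image_f.
  by case/imageP => k _ ->.
by move=> k1 k2 /eqP; rewrite eq_Tagged /= => /eqP.
Qed.
Lemma card_blk i : #|[pred j | tag (hh j) == i]| = alpha i.
Proof.
rewrite -card_tag -(on_card_preimset (f := hh)); last first.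
  by case: hh_bij => g h1 h2; exists g => x _.
by apply: eq_card => j; rewrite !inE.
Qed.
End S.
Section M.
Variables (C : numFieldType) (F : fieldType) (n : nat) (alpha : 'I_n -> nat) (Fn : ('I_n -> F) -> C).
Hypothesis Fadd : forall (i : 'I_n) (v : 'I_n -> F) (a b : F),
    Fn (fun j => if j == i then a + b else v j) = Fn (fun j => if j == i then a else v j) + Fn (fun j => if j == i then b else v j).
Local Notation N := (\sum_(i < n) alpha i)%N.
Local Notation hh := (@hh n alpha).
Definition BB (y : 'I_N -> F) : C := Fn (fun i => \prod_(j | tag (hh j) == i) y j).
Lemma BB_add k (y : 'I_N -> F) a b :
  BB (fun j => if j == k then a + b else y j) = BB (fun j => if j == k then a else y j) + BB (fun j => if j == k then b else y j).
Proof.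
pose i0 := tag (hh k).
pose P := \prod_(j | (tag (hh j) == i0) && (j != k)) y j.
pose w := fun i => \prod_(j | tag (hh j) == i) y j.
have E c : (fun i => \prod_(j | tag (hh j) == i) (if j == k then c else y j)) = (fun i => if i == i0 then c * P else w i).
  apply: FunctionalExtensionality.functional_extensionality => i.
  case: eqP => [->|ne].
    rewrite (bigD1 k) //= eqxx; congr (_ * _); apply: eq_bigr => j /andP[_ /negbTE ->] //.
  apply: eq_bigr => j /eqP Hj; case: eqP => // Ejk; subst j; by case: ne.
rewrite /BB !E mulrDl; exact: Fadd.
Qed.
Definition AA (y : 'I_N -> F) : C := (N`!%:R)^-1 * \sum_(s : {perm 'I_N}) BB (fun j => y (s j)).
Lemma AA_add k (y : 'I_N -> F) a b :
  AA (fun j => if j == k then a + b else y j) = AA (fun j => if j == k then a else y j) + AA (fun j => if j == k then b else y j).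
Proof.
rewrite /AA -mulrDr -big_split /=; congr (_ * _); apply: eq_bigr => s _.
have E c : (fun j => if s j == k then c else y (s j)) = (fun j => if j == (s^-1)%g k then c else y (s j)).
  apply: FunctionalExtensionality.functional_extensionality => j.
  by rewrite (canF_eq (permK s)).
by rewrite !E BB_add.
Qed.
Lemma AA_sym (t : {perm 'I_N}) y : AA (fun j => y (t j)) = AA y.
Proof.
rewrite /AA; congr (_ * _).
rewrite [RHS](reindex_inj (mulIg t)) /=; apply: eq_bigr => s _.
by congr BB; apply: FunctionalExtensionality.functional_extensionality => j; rewrite permM.
Qed.
Lemma AA_diag x : AA (fun _ => x) = Fn (fun i => x ^+ alpha i).
Proof.
rewrite /AA sumr_const (_ : #|_| = N`!); last exact: card_Sn.
rewrite -[BB _ *+ _]mulr_natl mulrA mulVf ?mul1r ?pnatr_eq0 -?lt0n ?fact_gt0 //.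
rewrite /BB; congr Fn; apply: FunctionalExtensionality.functional_extensionality => i.
by rewrite prodr_const card_blk.
Qed.
End M.
Local Open Scope complex_scope.
Theorem lemma3 (R : realType) (F : fieldType) (iota : {rmorphism F -> R[i]})
    (n : nat) (alpha : 'I_n -> nat) (Fn : ('I_n -> F) -> R[i]) :
  k_additive Fn -> symmetric_fun Fn ->
  generalized_monomial (\sum_(i < n) alpha i)%N
    (fun x : F => Fn (fun i => x ^+ alpha i)).
Proof.
move=> Hadd _.
exists (@AA _ _ n alpha Fn); split.
- move=> k y a b; rewrite /upd; apply: AA_add => i v c d.
  have := Hadd i v c d; rewrite /upd; exact.
- move=> s v; exact: AA_sym.
- move=> x; by rewrite AA_diag.
Qed.
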